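(* Let $T$ be a binary tree rooted at $O$, and let $p\in(0,1]$ be the common activation probability of all edges. Against every depth-first strategy $s$ of the searcher, the equal branching density $\varepsilon^*$ of the hider yields the same payoff, namely $$g(\varepsilon^*,s)=\frac12\tau(O)+\Lambda(O).$$
   Context: Setting: the stochastic search game on a finite tree $T$ rooted at $O$. Every edge has length $1$ and is active at each stage independently with the same probability $p\in(0,1]$. The hider picks an edge and stays there. The searcher, starting at $O$ and observing which edges are currently active, at each stage either waits or traverses an active edge incident to her position. The hider's payoff $g(\varepsilon,s)$ is the expected first time the searcher traverses the hider's edge. Orient the edges away from $O$. For a vertex $v$, $T_v$ is the subtree rooted at $v$ consisting of all edges below $v$. For an edge $e=(u,w)$, $T_e$ is $\{e\}\cup T_w$, rooted at $u$, and $E_e$ is its edge set. A leaf edge is an edge whose head has no outgoing edge. $T$ is binary if every vertex has at most two outgoing edges. A depth-first strategy (DFS) acts as follows at the searcher's current vertex: - if some untraversed outgoing edge is active, traverse one of them (possibly chosen at random); - if all untraversed outgoing edges are inactive, wait; - if all outgoing edges have been traversed, traverse the edge back toward $O$ if it is active, and wait otherwise. Cycle time: for a vertex or edge $z$, $\tau(z)$ is the expected time for a DFS on $T_z$, started at its root, to traverse every edge of $T_z$ and return to the root. It does not depend on the DFS. Equivalently, for binary trees: - $\tau(v)=0$ if $v$ has no outgoing edge; - $\tau(e)=\tau(w)+2/p$ for $e=(u,w)$; - $\tau(v)=\tau(e)$ if $v$ has exactly one outgoing edge $e$; - $\tau(v)=\tau(w_1)+\tau(w_2)+3/p+1/(1-(1-p)^2)$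 if $v$ has outgoing edges to $w_1,w_2$. The equal branching density $\varepsilon^*$ is the unique probability distribution on $E$ such that: - it is supported on the leaf edges; - at every vertex with two outgoing edges $e_1,e_2$, $\varepsilon^*(E_{e_1})/\tau(e_1)=\varepsilon^*(E_{e_2})/\tau(e_2)$. The function $\Lambda$ is defined recursively on rooted binary trees. Write $\Lambda(v)=\Lambda(T_v)$ and $\Lambda(e)=\Lambda(T_e)$. - $\Lambda(v)=0$ if $v$ has no outgoing edge. - If the root $r$ has a single outgoing edge $e=(r,w)$, then $\Lambda(r)=\Lambda(e)=\Lambda(w)$. - If $r$ has two outgoing edges $e_1=(r,w_1)$ and $e_2=(r,w_2)$, then $$\Lambda(r)=\frac{\tau(e_1)}{\tau(e_1)+\tau(e_2)}\Lambda(w_1)+\frac{\tau(e_2)}{\tau(e_1)+\tau(e_2)}\Lambda(w_2)+\frac12\Big(\frac1{1-(1-p)^2}-\frac1p\Big).$$ *)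

(* Defs.v *)
From Stdlib Require Import Reals List Bool.
Import ListNotations.
Open Scope R_scope.

Inductive btree : Type :=
| Nd0 : btree
| Nd1 : btree -> btree
| Nd2 : btree -> btree -> btree.

(* Vertices are addressed by the path from the root O = [] ; the only child
   of an Nd1 vertex is reached by [false], the two children of an Nd2 vertex
   by [false] / [true].  An edge (u,w) is identified by the address of its
   head w (a nonempty address); its tail is [removelast w]. *)
Definition addr := list bool.
Definition addr_eq_dec : forall a b : addr, {a = b} + {a <> b} :=
  list_eq_dec bool_dec.

Fixpoint edges (t : btree) : list addr :=
  match t with
  | Nd0 => []
  | Nd1 u => [false] :: map (cons false) (edges u)
  | Nd2 l r => [false] :: [true] :: map (cons false) (edges l)
                 ++ map (cons true) (edges r)
  end.

Fixpoint subtree_at (t : btree) (v : addr) : option btree :=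
  match v, t with
  | [], _ => Some t
  | false :: a, Nd1 u => subtree_at u a
  | false :: a, Nd2 l _ => subtree_at l a
  | true :: a, Nd2 _ r => subtree_at r a
  | _, _ => None
  end.

Definition children (T : btree) (v : addr) : list addr :=
  match subtree_at T v with
  | Some (Nd1 _) => [v ++ [false]]
  | Some (Nd2 _ _) => [v ++ [false]; v ++ [true]]
  | _ => []
  end.

Fixpoint sumR (l : list R) : R :=
  match l with [] => 0 | x :: l' => x + sumR l' end.

Fixpoint subsets {X : Type} (l : list X) : list (list X) :=
  match l with
  | [] => [[]]
  | x :: l' => map (cons x) (subsets l') ++ subsets l'
  end.

Definition inb (x : addr) (l : list addr) : bool :=
  if in_dec addr_eq_dec x l then true else false.

Definition act_weight (p : R) (E A : list addr) : R :=
  fold_right Rmult 1 (map (fun e => if inb e A then p else 1 - p) E).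

(* history: for each stage so far (most recent first), the searcher's position
   at the start of the stage and the set of active edges at that stage *)
Definition history := list (addr * list addr).

Inductive move : Type :=
| Wait : move
| Down : addr -> move
| Up : move
| Choose : addr -> addr -> move.

Definition dfs_move (T : btree) (v : addr) (trav : list addr) (A : list addr)
  : move :=
  match filter (fun c => negb (inb c trav)) (children T v) with
  | [] => match v with
          | [] => Wait
          | _ => if inb v A then Up else Wait
          end
  | U => match filter (fun c => inb c A) U with
         | [] => Wait
         | [c] => Down c
         | c1 :: c2 :: _ => Choose c1 c2
         end
  end.

(* A (behavioural) DFS is given by sigma : history -> [0,1], the probability of
   taking the first of two active untraversed outgoing edges.
   notfound ... e n h v trav = probability that, from the given situation, the
   searcher does not traverse the hider's edge e during the next n stages. *)
Fixpoint notfound (T : btree) (p : R) (sigma : history -> R) (e : addr)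
  (n : nat) (h : history) (v : addr) (trav : list addr) : R :=
  match n with
  | O => 1
  | S n' =>
    sumR (map (fun A =>
      act_weight p (edges T) A *
      (let h' := (v, A) :: h in
       let go c := if addr_eq_dec c e then 0
                   else notfound T p sigma e n' h' c (c :: trav) in
       match dfs_move T v trav A with
       | Wait => notfound T p sigma e n' h' v trav
       | Down c => go c
       | Up => notfound T p sigma e n' h' (removelast v) trav
       | Choose c1 c2 => sigma h' * go c1 + (1 - sigma h') * go c2
       end)) (subsets (edges T)))
  end.

(* P(time > n) for the hider mixed strategy eps; the payoff g(eps,s) is the
   sum over n >= 0 of these (E[X] = sum_n P(X > n) for X >= 1 integer). *)
Definition payoff_tail (T : btree) (p : R) (sigma : history -> R)
  (eps : addr -> R) (n : nat) : R :=
  sumR (map (fun e => eps e * notfound T p sigma e n [] [] []) (edges T)).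

Fixpoint tau (p : R) (t : btree) : R :=
  match t with
  | Nd0 => 0
  | Nd1 u => tau p u + 2 / p
  | Nd2 l r => tau p l + tau p r + 3 / p + 1 / (1 - (1 - p) ^ 2)
  end.

Fixpoint Lambda (p : R) (t : btree) : R :=
  match t with
  | Nd0 => 0
  | Nd1 u => Lambda p u
  | Nd2 l r =>
    let t1 := tau p l + 2 / p in
    let t2 := tau p r + 2 / p in
    t1 / (t1 + t2) * Lambda p l + t2 / (t1 + t2) * Lambda p r
    + / 2 * (1 / (1 - (1 - p) ^ 2) - 1 / p)
  end.

Definition subtree_edges (T : btree) (e : addr) : list addr :=
  filter (fun a => if addr_eq_dec (firstn (length e) a) e then true else false)
    (edges T).

Definition is_leaf_edge (T : btree) (e : addr) : Prop :=
  subtree_at T e = Some Nd0.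

Definition equal_branching_density (T : btree) (p : R) (eps : addr -> R) : Prop :=
  (forall e, In e (edges T) -> 0 <= eps e) /\
  sumR (map eps (edges T)) = 1 /\
  (forall e, In e (edges T) -> ~ is_leaf_edge T e -> eps e = 0) /\
  (forall v l r, subtree_at T v = Some (Nd2 l r) ->
     sumR (map eps (subtree_edges T (v ++ [false]))) / (tau p l + 2 / p)
     = sumR (map eps (subtree_edges T (v ++ [true]))) / (tau p r + 2 / p)).

(* Main.v *)
Require Import Defs.
From Stdlib Require Import Reals List Lra Lia Bool.
Import ListNotations.
Open Scope R_scope.


Lemma sumR_app l1 l2 : sumR (l1 ++ l2) = sumR l1 + sumR l2.
Proof. induction l1; simpl; [ring| rewrite IHl1; ring]. Qed.

Lemma sumR_plus {X} (f g : X -> R) l :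
  sumR (map (fun x => f x + g x) l) = sumR (map f l) + sumR (map g l).
Proof. induction l; simpl; [ring| rewrite IHl; ring]. Qed.

Lemma sumR_scal {X} c (f : X -> R) l :
  sumR (map (fun x => c * f x) l) = c * sumR (map f l).
Proof. induction l; simpl; [ring| rewrite IHl; ring]. Qed.

Lemma sumR_ext {X} (f g : X -> R) l :
  (forall x, In x l -> f x = g x) -> sumR (map f l) = sumR (map g l).
Proof. induction l; simpl; intros H; auto. rewrite H, IHl; auto. Qed.

Lemma sumR_le {X} (f g : X -> R) l :
  (forall x, In x l -> f x <= g x) -> sumR (map f l) <= sumR (map g l).
Proof. induction l; simpl; intros H; [lra|]. pose proof (H a (or_introl eq_refl)).
  pose proof (IHl (fun x Hx => H x (or_intror Hx))). lra. Qed.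

Lemma sumR_zero {X} (l : list X) : sumR (map (fun _ => 0) l) = 0.
Proof. induction l; simpl; auto; rewrite IHl; ring. Qed.

Lemma sumR_nonneg {X} (f : X -> R) l :
  (forall x, In x l -> 0 <= f x) -> 0 <= sumR (map f l).
Proof. intros H. replace 0 with (sumR (map (fun _ : X => 0) l)).
  apply sumR_le; auto. apply sumR_zero. Qed.


Lemma sumR_swap {X Y} (f : X -> Y -> R) l1 l2 :
  sumR (map (fun x => sumR (map (fun y => f x y) l2)) l1) =
  sumR (map (fun y => sumR (map (fun x => f x y) l1)) l2).
Proof. induction l1; simpl. rewrite sumR_zero; auto.
  rewrite IHl1, <- sumR_plus. auto. Qed.

Lemma inb_true x l : inb x l = true <-> In x l.
Proof. unfold inb. destruct (in_dec addr_eq_dec x l); split; intros; auto; congruence. Qed.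
Lemma inb_false x l : inb x l = false <-> ~ In x l.
Proof. unfold inb. destruct (in_dec addr_eq_dec x l); split; intros; auto; congruence. Qed.
Lemma inb_cons_same x l : inb x (x :: l) = true.
Proof. apply inb_true; simpl; auto. Qed.
Lemma inb_cons_diff x y l : x <> y -> inb x (y :: l) = inb x l.
Proof. intros H. destruct (inb x l) eqn:E.
  apply inb_true in E; apply inb_true; simpl; auto.
  apply inb_false in E; apply inb_false; simpl; intros [?|?]; auto. Qed.

Lemma subsets_incl {X} (l : list X) A : In A (subsets l) -> forall y, In y A -> In y l.
Proof. revert A; induction l; simpl; intros A HA y Hy.
  destruct HA as [<-|[]]; destruct Hy.
  apply in_app_or in HA; destruct HA as [HA|HA].
  apply in_map_iff in HA; destruct HA as [A' [<- HA']]. destruct Hy as [->|Hy]; auto.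
  right; eapply IHl; eauto. right; eapply IHl; eauto. Qed.

Section Weights.
Variable p : R.

Lemma act_weight_cons_in x l A : ~ In x l ->
  act_weight p (x :: l) (x :: A) = p * act_weight p l A.
Proof. intros Hx. unfold act_weight; simpl. rewrite inb_cons_same. f_equal.
  clear -Hx; induction l; simpl; auto. rewrite inb_cons_diff.
  rewrite IHl; auto. intros H; apply Hx; simpl; auto. intros ->; apply Hx; simpl; auto. Qed.

Lemma act_weight_cons_out x l A : ~ In x A ->
  act_weight p (x :: l) A = (1 - p) * act_weight p l A.
Proof. intros Hx. unfold act_weight; simpl. apply inb_false in Hx; rewrite Hx; auto. Qed.

Lemma sum_subsets_cons x l (g : list addr -> R) : ~ In x l ->
  sumR (map (fun A => act_weight p (x :: l) A * g A) (subsets (x :: l))) =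
  p * sumR (map (fun A => act_weight p l A * g (x :: A)) (subsets l)) +
  (1 - p) * sumR (map (fun A => act_weight p l A * g A) (subsets l)).
Proof. intros Hx. simpl. rewrite map_app, sumR_app, map_map. f_equal.
  rewrite <- sumR_scal. apply sumR_ext. intros A HA. rewrite act_weight_cons_in; auto; ring.
  rewrite <- sumR_scal. apply sumR_ext. intros A HA. rewrite act_weight_cons_out; try ring.
  intros HxA; apply Hx; eapply subsets_incl; eauto. Qed.

Lemma marg0 l (c : R) : NoDup l ->
  sumR (map (fun A => act_weight p l A * c) (subsets l)) = c.
Proof. induction l; intros Hl. simpl. unfold act_weight; simpl; ring.
  inversion Hl; subst. rewrite sum_subsets_cons; auto. rewrite IHl; auto. ring. Qed.

Lemma marg1 l c (G : bool -> R) : NoDup l -> In c l ->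
  sumR (map (fun A => act_weight p l A * G (inb c A)) (subsets l)) =
  p * G true + (1 - p) * G false.
Proof. induction l; intros Hl Hc. destruct Hc.
  inversion Hl; subst. rewrite sum_subsets_cons; auto.
  destruct (addr_eq_dec a c) as [<-|Hne].
  - transitivity (p * sumR (map (fun A => act_weight p l A * G true) (subsets l)) +
      (1 - p) * sumR (map (fun A => act_weight p l A * G false) (subsets l))).
    f_equal; f_equal; apply sumR_ext; intros A HA.
    rewrite inb_cons_same; auto.
    rewrite (proj2 (inb_false a A)); auto. intros Ha; apply H1; eapply subsets_incl; eauto.
    rewrite !marg0; auto.
  - destruct Hc as [->|Hc]. congruence.
    transitivity (p * sumR (map (fun A => act_weight p l A * G (inb c A)) (subsets l)) +
      (1 - p) * sumR (map (fun A => act_weight p l A * G (inb c A)) (subsets l))).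
    f_equal; f_equal; apply sumR_ext; intros A HA. rewrite inb_cons_diff; auto.
    rewrite IHl; auto. ring. Qed.

Lemma marg2 l c1 c2 (G : bool -> bool -> R) : NoDup l -> In c1 l -> In c2 l -> c1 <> c2 ->
  sumR (map (fun A => act_weight p l A * G (inb c1 A) (inb c2 A)) (subsets l)) =
  p * p * G true true + p * (1 - p) * G true false + (1 - p) * p * G false true
  + (1 - p) * (1 - p) * G false false.
Proof. induction l; intros Hl H1 H2 Hne. destruct H1.
  inversion Hl; subst. rewrite sum_subsets_cons; auto.
  destruct (addr_eq_dec a c1) as [<-|Hn1].
  - destruct H2 as [->|H2]; [congruence|].
    transitivity (p * sumR (map (fun A => act_weight p l A * G true (inb c2 A)) (subsets l)) +
      (1 - p) * sumR (map (fun A => act_weight p l A * G false (inb c2 A)) (subsets l))).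
    f_equal; f_equal; apply sumR_ext; intros A HA.
    rewrite inb_cons_same, inb_cons_diff; auto.
    rewrite (proj2 (inb_false a A)); auto. intros Ha; apply H3; eapply subsets_incl; eauto.
    rewrite (marg1 l c2 (G true)), (marg1 l c2 (G false)); auto. ring.
  - destruct H1 as [->|H1]; [congruence|].
    destruct (addr_eq_dec a c2) as [<-|Hn2].
    + transitivity (p * sumR (map (fun A => act_weight p l A * G (inb c1 A) true) (subsets l)) +
      (1 - p) * sumR (map (fun A => act_weight p l A * G (inb c1 A) false) (subsets l))).
      f_equal; f_equal; apply sumR_ext; intros A HA.
      rewrite inb_cons_same, inb_cons_diff; auto.
      rewrite (proj2 (inb_false a A)); auto. intros Ha; apply H3; eapply subsets_incl; eauto.
      rewrite (marg1 l c1 (fun b => G b true)), (marg1 l c1 (fun b => G b false)); auto. ring.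
    + destruct H2 as [->|H2]; [congruence|].
      transitivity (p * sumR (map (fun A => act_weight p l A * G (inb c1 A) (inb c2 A)) (subsets l)) +
      (1 - p) * sumR (map (fun A => act_weight p l A * G (inb c1 A) (inb c2 A)) (subsets l))).
      f_equal; f_equal; apply sumR_ext; intros A HA. rewrite !inb_cons_diff; auto.
      rewrite IHl; auto. ring. Qed.

Lemma act_weight_nonneg E A : 0 <= p <= 1 -> 0 <= act_weight p E A.
Proof. intros Hp. unfold act_weight. induction E; simpl. lra.
  apply Rmult_le_pos; auto. destruct (inb a A); lra. Qed.
End Weights.

Lemma sub_nil t : subtree_at t [] = Some t.
Proof. destruct t; reflexivity. Qed.

Lemma subtree_at_app T v w : subtree_at T (v ++ w) =
  match subtree_at T v with Some t => subtree_at t w | None => None end.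
Proof. revert T; induction v as [|b v IH]; intros T.
  destruct T; simpl; destruct w; auto.
  destruct b, T; simpl; auto. Qed.

Lemma edges_sub T v t x : subtree_at T v = Some t -> In x (edges t) -> In (v ++ x) (edges T).
Proof. revert T; induction v as [|b v IH]; intros T H Hx.
  destruct T; simpl in *; inversion H; subst; auto.
  simpl in *. destruct b, T; simpl in H; try discriminate.
  all: simpl; right; first [ apply in_map; eauto | right; apply in_or_app;
     first [left; apply in_map; eauto | right; apply in_map; eauto]]. Qed.

Lemma child_edge T v t b t' : subtree_at T v = Some t -> subtree_at t [b] = Some t' ->
  In (v ++ [b]) (edges T) /\ subtree_at T (v ++ [b]) = Some t'.
Proof. intros H1 H2. split. eapply edges_sub; eauto.
  destruct b, t; simpl in H2; try discriminate; simpl; auto.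
  rewrite subtree_at_app, H1; auto. Qed.

Lemma sub_prefix T v b t : subtree_at T (v ++ [b]) = Some t ->
  exists t', subtree_at T v = Some t' /\ subtree_at t' [b] = Some t.
Proof. rewrite subtree_at_app. destruct (subtree_at T v); [eauto|discriminate]. Qed.

Lemma edge_of_sub T v t : v <> [] -> subtree_at T v = Some t -> In v (edges T).
Proof. intros Hv H. pose proof (app_removelast_last false Hv) as E.
  rewrite E in *. destruct (sub_prefix _ _ _ _ H) as [t' [H1 H2]].
  eapply child_edge; eauto. Qed.

Lemma edges_nonnil T x : In x (edges T) -> x <> [].
Proof. destruct T; simpl; intros H.
  destruct H. destruct H as [<-|H]; [discriminate|]. apply in_map_iff in H; destruct H as [y [<- _]]; discriminate.
  destruct H as [<-|[<-|H]]; try discriminate. apply in_app_or in H.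
  destruct H as [H|H]; apply in_map_iff in H; destruct H as [y [<- _]]; discriminate. Qed.

Lemma NoDup_map_inj {A B} (f : A -> B) l : (forall x y, f x = f y -> x = y) -> NoDup l -> NoDup (map f l).
Proof. intros Hf Hl. apply NoDup_map_NoDup_ForallPairs; auto. intros a b _ _; auto. Qed.

Lemma NoDup_edges T : NoDup (edges T).
Proof. induction T; simpl.
  - constructor.
  - constructor. intros H; apply in_map_iff in H; destruct H as [x [Hx Hx']].
    inversion Hx; subst. eapply edges_nonnil; eauto.
    apply NoDup_map_inj; auto. intros x y H; inversion H; auto.
  - constructor. intros [H|H]; [discriminate|].
    apply in_app_or in H; destruct H as [H|H]; apply in_map_iff in H;
    destruct H as [x [Hx Hx']]; inversion Hx; subst; eapply edges_nonnil; eauto.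
    constructor. intros H.
    apply in_app_or in H; destruct H as [H|H]; apply in_map_iff in H;
    destruct H as [x [Hx Hx']]; inversion Hx; subst; eapply edges_nonnil; eauto.
    apply NoDup_app.
    apply NoDup_map_inj; auto. intros x y H; inversion H; auto.
    apply NoDup_map_inj; auto. intros x y H; inversion H; auto.
    intros a H1 H2. apply in_map_iff in H1, H2. destruct H1 as [x [<- _]];
    destruct H2 as [y [Hy _]]. discriminate. Qed.

Fixpoint hgt (t : btree) : nat := match t with Nd0 => 0 | Nd1 u => S (hgt u)
  | Nd2 l r => S (Nat.max (hgt l) (hgt r)) end.

Lemma length_sub T v t : subtree_at T v = Some t -> (length v <= hgt T)%nat.
Proof. revert T; induction v as [|b v IH]; intros T H; [simpl; lia|].
  destruct b, T; simpl in H; try discriminate; simpl;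
  specialize (IH _ H); lia. Qed.

Lemma children_spec T v c : In c (children T v) ->
  exists t b t', subtree_at T v = Some t /\ c = v ++ [b] /\ subtree_at t [b] = Some t'.
Proof. unfold children. destruct (subtree_at T v) as [[|u|l r]|] eqn:E; simpl; try tauto.
  - intros [<-|[]]. exists (Nd1 u), false, u; repeat split; auto; simpl; apply sub_nil.
  - intros [<-|[<-|[]]]. exists (Nd2 l r), false, l; repeat split; auto; simpl; apply sub_nil. exists (Nd2 l r), true, r; repeat split; auto; simpl; apply sub_nil. Qed.

Section TauL.
Variable p : R.
Hypothesis Hp : 0 < p <= 1.

Lemma q_facts : p <= 1 - (1 - p) ^ 2 /\ 1 / (1 - (1 - p) ^ 2) <= 1 / p /\ 0 < 1 / (1 - (1 - p) ^ 2).
Proof. assert (p <= 1 - (1-p)^2) by nra. split; auto. split.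
  apply Rmult_le_compat_l; [lra|]. apply Rinv_le_contravar; lra.
  apply Rdiv_lt_0_compat; lra. Qed.

Lemma inv_p_pos : 0 < 1 / p.
Proof. apply Rdiv_lt_0_compat; lra. Qed.

Lemma tau_nonneg t : 0 <= tau p t.
Proof. pose proof q_facts as [? [? ?]]; pose proof inv_p_pos. induction t; cbn [tau]; unfold Rdiv in *; lra. Qed.

Lemma tau_sub T v t : subtree_at T v = Some t -> tau p t <= tau p T.
Proof. revert T; induction v as [|b v IH]; intros T H.
  rewrite sub_nil in H; inversion H; lra.
  pose proof q_facts as [? [? ?]]; pose proof inv_p_pos.
  destruct b, T; simpl in H; try discriminate; specialize (IH _ H); cbn [tau];
  repeat match goal with |- context [tau p ?x] => 
    lazymatch goal with H : 0 <= tau p x |- _ => fail | _ => pose proof (tau_nonneg x) end end;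
  unfold Rdiv in *; lra. Qed.

Lemma Lambda_bounds t : Lambda p t <= 0 /\ 0 <= tau p t / 2 + Lambda p t.
Proof. pose proof q_facts as [Q1 [Q2 Q3]]; pose proof inv_p_pos.
  induction t; cbn [tau Lambda]. lra. pose proof (tau_nonneg t). unfold Rdiv in *; lra.
  pose proof (tau_nonneg t1); pose proof (tau_nonneg t2).
  set (t1' := tau p t1 + 2 / p). set (t2' := tau p t2 + 2 / p).
  assert (0 < t1') by (unfold t1'; lra). assert (0 < t2') by (unfold t2'; lra).
  set (a := t1' / (t1' + t2')). set (b := t2' / (t1' + t2')).
  assert (0 <= a <= 1 /\ 0 <= b <= 1 /\ a + b = 1) as [Ha [Hb Hab]].
  { unfold a, b. split; [|split]; [split|split|].
    apply Rmult_le_pos; [lra| left; apply Rinv_0_lt_compat; lra]. apply Rmult_le_reg_r with (t1'+t2'); [lra|]; unfold Rdiv; 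
    rewrite Rmult_assoc, Rinv_l; lra.
    apply Rmult_le_pos; [lra| left; apply Rinv_0_lt_compat; lra]. apply Rmult_le_reg_r with (t1'+t2'); [lra|]; unfold Rdiv; 
    rewrite Rmult_assoc, Rinv_l; lra. field; lra. }
  destruct IHt1, IHt2.
  assert (a * Lambda p t1 >= Lambda p t1) by nra.
  assert (b * Lambda p t2 >= Lambda p t2) by nra.
  assert (a * Lambda p t1 <= 0) by nra. assert (b * Lambda p t2 <= 0) by nra.
  unfold Rdiv in *. split; lra. Qed.
End TauL.

Definition pre (a x : addr) : bool :=
  if addr_eq_dec (firstn (length a) x) a then true else false.

Lemma pre_nil x : pre [] x = true.
Proof. unfold pre. simpl. destruct (addr_eq_dec [] []); congruence. Qed.

Lemma pre_cons b a b' x : pre (b :: a) (b' :: x) = andb (Bool.eqb b' b) (pre a x).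
Proof. unfold pre. simpl. destruct (addr_eq_dec (b' :: firstn (length a) x) (b :: a)) as [E|E];
  destruct (addr_eq_dec (firstn (length a) x) a) as [E'|E']; destruct b, b'; simpl; auto;
  try (inversion E; congruence); try (subst; congruence). Qed.

Lemma pre_nil_r a : pre a [] = match a with [] => true | _ => false end.
Proof. unfold pre. rewrite firstn_nil. destruct a; destruct (addr_eq_dec _ _); congruence. Qed.

Lemma filter_all {X} (P : X -> bool) l : (forall x, P x = true) -> filter P l = l.
Proof. intros H; induction l; simpl; auto; rewrite H, IHl; auto. Qed.
Lemma filter_none {X} (P : X -> bool) l : (forall x, P x = false) -> filter P l = [].
Proof. intros H; induction l; simpl; auto; rewrite H, IHl; auto. Qed.

Lemma sumR_map_cons (f : addr -> R) b L :
  sumR (map f (map (cons b) L)) = sumR (map (fun x : list bool => f (b :: x)) L).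
Proof. induction L; simpl; auto; rewrite IHL; auto. Qed.

Lemma SE T a t (f : addr -> R) : subtree_at T a = Some t ->
  sumR (map f (filter (pre a) (edges T))) =
  (match a with [] => 0 | _ => f a end) + sumR (map (fun x => f (a ++ x)) (edges t)).
Proof. revert a t f; induction T as [|u IH|l IHl r IHr]; intros a t f H.
  - destruct a; simpl in H; [inversion H; subst|destruct b; discriminate]. simpl; ring.
  - destruct a as [|b a].
    + rewrite sub_nil in H; inversion H; subst. rewrite filter_all by apply pre_nil. rewrite Rplus_0_l; reflexivity.
    + destruct b; simpl in H; [discriminate|]. cbn [edges filter].
      rewrite pre_cons, filter_map_swap. simpl Bool.eqb. cbn [andb].
      rewrite (filter_ext (fun x => pre (false :: a) (false :: x)) (pre a)).
      2:{ intros x; rewrite pre_cons; reflexivity. }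
      rewrite pre_nil_r.
      specialize (IH a t (fun x : list bool => f (false :: x)) H). 
      destruct a; simpl; try rewrite sumR_map_cons; simpl in IH; rewrite ?Rplus_0_l in IH;
        first [ f_equal; etransitivity; [exact IH|reflexivity] | etransitivity; [exact IH|reflexivity] ].
  - destruct a as [|b a].
    + rewrite sub_nil in H; inversion H; subst. rewrite filter_all by apply pre_nil. rewrite Rplus_0_l; reflexivity.
    + cbn [edges filter]. rewrite !pre_cons, filter_app, !filter_map_swap.
      destruct b; simpl in H; simpl Bool.eqb; cbn [andb].
      * rewrite (filter_ext (fun x => pre (true :: a) (true :: x)) (pre a)).
        2:{ intros x; rewrite pre_cons; reflexivity. }
        rewrite (filter_ext (fun x => pre (true :: a) (false :: x)) (fun _ => false)).
        2:{ intros x; rewrite pre_cons; reflexivity. }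
        rewrite (filter_none (fun _ => false)) by auto.
        rewrite pre_nil_r.
        specialize (IHr a t (fun x : list bool => f (true :: x)) H). 
        destruct a; simpl; try rewrite sumR_map_cons; simpl in IHr; rewrite ?Rplus_0_l in IHr;
        first [ f_equal; etransitivity; [exact IHr|reflexivity] | etransitivity; [exact IHr|reflexivity] ].
      * rewrite (filter_ext (fun x => pre (false :: a) (false :: x)) (pre a)).
        2:{ intros x; rewrite pre_cons; reflexivity. }
        rewrite (filter_ext (fun x => pre (false :: a) (true :: x)) (fun _ => false)).
        2:{ intros x; rewrite pre_cons; reflexivity. }
        rewrite (filter_none (fun _ => false)) by auto.
        rewrite pre_nil_r, app_nil_r.
        specialize (IHl a t (fun x : list bool => f (false :: x)) H). 
        destruct a; simpl; try rewrite sumR_map_cons; simpl in IHl; rewrite ?Rplus_0_l in IHl;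
        first [ f_equal; etransitivity; [exact IHl|reflexivity] | etransitivity; [exact IHl|reflexivity] ].
Qed.

Section Main.
Variable T : btree.
Variable p : R.
Variable sigma : history -> R.
Variable eps : addr -> R.
Hypothesis Hp : 0 < p <= 1.
Hypothesis Hsig : forall h, 0 <= sigma h <= 1.
Hypothesis Hdens : equal_branching_density T p eps.

Definition Mb (t : btree) (a : addr) : R := sumR (map (fun x => eps (a ++ x)) (edges t)).

Lemma sumR_map_cons' (a : addr) b L :
  sumR (map (fun x => eps (a ++ x)) (map (cons b) L)) =
  sumR (map (fun x : list bool => eps ((a ++ [b]) ++ x)) L).
Proof. induction L; simpl; auto; rewrite IHL, <- app_assoc; auto. Qed.

Lemma Mb_Nd0 a : Mb Nd0 a = 0.
Proof. reflexivity. Qed.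
Lemma Mb_Nd1 u a : Mb (Nd1 u) a = eps (a ++ [false]) + Mb u (a ++ [false]).
Proof. unfold Mb. cbn [edges map sumR]. rewrite sumR_map_cons'. reflexivity. Qed.
Lemma Mb_Nd2 l r a : Mb (Nd2 l r) a =
  (eps (a ++ [false]) + Mb l (a ++ [false])) + (eps (a ++ [true]) + Mb r (a ++ [true])).
Proof. unfold Mb. cbn [edges map sumR]. rewrite map_app, sumR_app, !sumR_map_cons'. 
  unfold Mb; ring. Qed.

Lemma eps_nonneg e : In e (edges T) -> 0 <= eps e.
Proof. destruct Hdens as [H _]; auto. Qed.

Lemma Mb_nonneg a t : subtree_at T a = Some t -> 0 <= Mb t a.
Proof. intros H. apply sumR_nonneg. intros x Hx. apply eps_nonneg. eapply edges_sub; eauto. Qed.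

Definition qinv := 1 / (1 - (1 - p) ^ 2).

Fixpoint U (t : btree) (a : addr) : R :=
  match t with
  | Nd0 => 0
  | Nd1 u => (eps (a ++ [false]) + Mb u (a ++ [false])) / p + U u (a ++ [false])
  | Nd2 l r =>
      ((eps (a ++ [false]) + Mb l (a ++ [false])) + (eps (a ++ [true]) + Mb r (a ++ [true]))) * qinv
      + U l (a ++ [false]) + U r (a ++ [true])
      + (eps (a ++ [true]) + Mb r (a ++ [true])) * (tau p l + 2 / p)
  end.

Lemma leaf_mass c tc : subtree_at T c = Some tc -> In c (edges T) ->
  (eps c + Mb tc c) * (tau p tc / 2 + Lambda p tc) = Mb tc c * (tau p tc / 2 + Lambda p tc).
Proof. intros H Hc. destruct tc. cbn [tau Lambda]. unfold Rdiv; ring.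
  all: destruct Hdens as [_ [_ [H3 _]]]; rewrite (H3 c Hc); [ring|];
  unfold is_leaf_edge; rewrite H; discriminate. Qed.

Lemma SE_sub T0 c t (f : addr -> R) : subtree_at T0 c = Some t -> c <> [] ->
  sumR (map f (subtree_edges T0 c)) = f c + sumR (map (fun x => f (c ++ x)) (edges t)).
Proof. intros H Hc. pose proof (SE T0 c t f H). destruct c; [congruence|]. exact H0. Qed.

Lemma branching v l r : subtree_at T v = Some (Nd2 l r) ->
  (eps (v ++ [false]) + Mb l (v ++ [false])) * (tau p r + 2 / p) =
  (eps (v ++ [true]) + Mb r (v ++ [true])) * (tau p l + 2 / p).
Proof. intros H. destruct Hdens as [_ [_ [_ H4]]]. specialize (H4 _ _ _ H).
  destruct (child_edge T v (Nd2 l r) false l H) as [_ H0]. simpl; apply sub_nil.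
  destruct (child_edge T v (Nd2 l r) true r H) as [_ H1]. simpl; apply sub_nil.
  rewrite (SE_sub _ _ _ eps H0), (SE_sub _ _ _ eps H1) in H4 by (destruct v; discriminate).
  fold (Mb l (v ++ [false])) in H4. fold (Mb r (v ++ [true])) in H4.
  pose proof (tau_nonneg p Hp l); pose proof (tau_nonneg p Hp r); pose proof (inv_p_pos p Hp).
  assert (0 < tau p l + 2 / p) by (unfold Rdiv in *; lra).
  assert (0 < tau p r + 2 / p) by (unfold Rdiv in *; lra).
  set (m0 := eps (v ++ [false]) + Mb l (v ++ [false])) in *.
  set (m1 := eps (v ++ [true]) + Mb r (v ++ [true])) in *.
  set (t1 := tau p l + 2 / p) in *. set (t2 := tau p r + 2 / p) in *.
  apply (f_equal (fun z => z * t1 * t2)) in H4. field_simplify in H4; try lra.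
Qed.

Lemma UL t a : subtree_at T a = Some t -> U t a = Mb t a * (tau p t / 2 + Lambda p t).
Proof. revert a; induction t as [|u IH|l IHl r IHr]; intros a H.
  - simpl. unfold Mb; simpl; ring.
  - destruct (child_edge T a (Nd1 u) false u H) as [Hc Hs]. simpl; apply sub_nil.
    cbn [U]. rewrite (IH _ Hs), Mb_Nd1. rewrite <- (leaf_mass _ _ Hs Hc).
    cbn [tau Lambda]. field. lra.
  - destruct (child_edge T a (Nd2 l r) false l H) as [Hc0 Hs0]. simpl; apply sub_nil.
    destruct (child_edge T a (Nd2 l r) true r H) as [Hc1 Hs1]. simpl; apply sub_nil.
    pose proof (branching _ _ _ H) as Hb.
    cbn [U]. rewrite (IHl _ Hs0), (IHr _ Hs1), Mb_Nd2.
    rewrite <- (leaf_mass _ _ Hs0 Hc0), <- (leaf_mass _ _ Hs1 Hc1).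
    cbn [tau Lambda]. cbv zeta.
    pose proof (tau_nonneg p Hp l); pose proof (tau_nonneg p Hp r); pose proof (inv_p_pos p Hp).
    pose proof (q_facts p Hp) as [Q1 [Q2 Q3]].
    assert (0 < tau p l + 2 / p) by (unfold Rdiv in *; lra).
    assert (0 < tau p r + 2 / p) by (unfold Rdiv in *; lra).
    unfold qinv.
    set (m0 := eps (a ++ [false]) + Mb l (a ++ [false])) in *.
    set (m1 := eps (a ++ [true]) + Mb r (a ++ [true])) in *.
    set (t1 := tau p l + 2 / p) in *. set (t2 := tau p r + 2 / p) in *.
    set (q := 1 - (1 - p) ^ 2) in *.
    assert (Hm1 : m1 = m0 * t2 / t1) by (rewrite Hb; field; lra).
    assert (Htl : tau p l = t1 - 2 / p) by (unfold t1; ring).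
    assert (Htr : tau p r = t2 - 2 / p) by (unfold t2; ring).
    rewrite Hm1, Htl, Htr. field. repeat split; try lra.

Qed.

Definition zero3 : R * R * R := (0, 0, 0).
Definition sgl (c : addr) (t : btree) : R * R * R :=
  ((eps c + Mb t c) / p + U t c, eps c + Mb t c, tau p t + 2 / p).
Definition loc (u : addr) (tr : list addr) : R * R * R :=
  match subtree_at T u with
  | Some (Nd1 t) => if inb (u ++ [false]) tr then zero3 else sgl (u ++ [false]) t
  | Some (Nd2 l r) =>
      if inb (u ++ [false]) tr then
        (if inb (u ++ [true]) tr then zero3 else sgl (u ++ [true]) r)
      else (if inb (u ++ [true]) tr then sgl (u ++ [false]) l
            else (U (Nd2 l r) u, Mb (Nd2 l r) u, tau p (Nd2 l r)))
  | _ => zero3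
  end.
Definition locL u tr := fst (fst (loc u tr)).
Definition locM u tr := snd (fst (loc u tr)).
Definition locD u tr := snd (loc u tr).

Fixpoint Mup (r : list bool) tr : R :=
  match r with [] => locM [] tr | b :: r' => locM (rev (b :: r')) tr + Mup r' tr end.
Fixpoint Phi (r : list bool) tr : R :=
  match r with
  | [] => locL [] tr
  | b :: r' => locL (rev (b :: r')) tr + Phi r' tr + Mup r' tr * (locD (rev (b :: r')) tr + 1 / p)
  end.
Definition Psi v tr := Phi (rev v) tr.
Definition Mv v tr := Mup (rev v) tr.
Definition PU r tr d := match r with [] => 0 | _ :: r' => Phi r' tr + Mup r' tr * (d + 1 / p) end.
Definition MU r tr := match r with [] => 0 | _ :: r' => Mup r' tr end.

Lemma Psi_eq v tr : Psi v tr = locL v tr + PU (rev v) tr (locD v tr).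
Proof. unfold Psi. destruct (rev v) as [|b r] eqn:E.
  - assert (v = []) by (rewrite <- (rev_involutive v), E; auto). subst. simpl. ring.
  - cbn [Phi]. rewrite <- E, rev_involutive. rewrite E; unfold PU; ring. Qed.
Lemma Mv_eq v tr : Mv v tr = locM v tr + MU (rev v) tr.
Proof. unfold Mv. destruct (rev v) as [|b r] eqn:E.
  - assert (v = []) by (rewrite <- (rev_involutive v), E; auto). subst. simpl. ring.
  - cbn [Mup]. rewrite <- E, rev_involutive. rewrite E; unfold MU. ring. Qed.
Lemma PU_affine r tr d : PU r tr d = PU r tr 0 + MU r tr * d.
Proof. destruct r; simpl; ring. Qed.
Lemma rev_snoc v (b : bool) : rev (v ++ [b]) = b :: rev v.
Proof. rewrite rev_app_distr; reflexivity. Qed.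
Lemma Psi_child v b tr : Psi (v ++ [b]) tr =
  locL (v ++ [b]) tr + Psi v tr + Mv v tr * (locD (v ++ [b]) tr + 1 / p).
Proof. unfold Psi, Mv. rewrite rev_snoc. cbn [Phi]. rewrite <- rev_snoc, rev_involutive. reflexivity. Qed.
Lemma Mv_child v b tr : Mv (v ++ [b]) tr = locM (v ++ [b]) tr + Mv v tr.
Proof. unfold Mv. rewrite rev_snoc. cbn [Mup]. rewrite <- rev_snoc, rev_involutive. reflexivity. Qed.

Lemma len_neq_app (u c : addr) b : length c <> S (length u) -> c <> u ++ [b].
Proof. intros H E. subst. rewrite length_app in H. simpl in H. lia. Qed.

Lemma loc_indep (u c : addr) (tr : list addr) : length c <> S (length u) -> loc u (c :: tr) = loc u tr.
Proof. intros H. unfold loc. rewrite !inb_cons_diff; auto; apply not_eq_sym; apply len_neq_app; auto. Qed.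

Lemma Phi_indep r (c : addr) (tr : list addr) : (S (length r) < length c)%nat ->
  Phi r (c :: tr) = Phi r tr /\ Mup r (c :: tr) = Mup r tr.
Proof. induction r as [|b r IH]; intros H.
  - simpl. unfold locL, locM. rewrite loc_indep; auto. simpl in *; lia.
  - simpl in H. destruct IH as [IH1 IH2]; [lia|]. cbn [Phi Mup].
    unfold locL, locM, locD. rewrite loc_indep. rewrite IH1, IH2; auto.
    rewrite length_rev; simpl; lia. Qed.

Lemma PU_indep (v : addr) b (tr : list addr) d (c : addr) : c = v ++ [b] ->
  PU (rev v) (c :: tr) d = PU (rev v) tr d /\ MU (rev v) (c :: tr) = MU (rev v) tr.
Proof. intros ->. destruct (rev v) as [|b' r] eqn:E; simpl; auto.
  assert (Hl : length v = S (length r)) by (rewrite <- length_rev, E; reflexivity).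
  destruct (Phi_indep r (v ++ [b]) tr) as [H1 H2]. rewrite length_app; simpl; lia.
  rewrite H1, H2; auto. Qed.

Lemma loc_fresh u t tr : subtree_at T u = Some t -> (forall b, ~ In (u ++ [b]) tr) ->
  loc u tr = (U t u, Mb t u, tau p t).
Proof. intros H Hf. unfold loc. rewrite H.
  rewrite !(proj2 (inb_false _ _) (Hf _)).
  destruct t; try reflexivity. unfold sgl. rewrite Mb_Nd1. reflexivity. Qed.

Lemma loc_done u tr : (forall c, In c (children T u) -> In c tr) -> loc u tr = zero3.
Proof. unfold children, loc. intros H. destruct (subtree_at T u) as [[|t|l r]|]; auto.
  - rewrite (proj2 (inb_true _ _)); auto. apply H; simpl; auto.
  - rewrite !(proj2 (inb_true _ _)); auto; apply H; simpl; auto. Qed.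

Lemma app_snoc_neq (v : addr) : v ++ [false] <> v ++ [true].
Proof. intros E. apply app_inj_tail in E. destruct E; discriminate. Qed.

Lemma locM_down v t b tc tr : subtree_at T v = Some t -> subtree_at t [b] = Some tc ->
  ~ In (v ++ [b]) tr ->
  locM v tr = locM v ((v ++ [b] : addr) :: tr) + (eps (v ++ [b]) + Mb tc (v ++ [b])).
Proof. intros H1 H2 H3. unfold locM, loc. rewrite H1.
  pose proof (app_snoc_neq v) as Hn.
  apply inb_false in H3.
  destruct t; destruct b; simpl in H2; try discriminate; rewrite sub_nil in H2; inversion H2; subst;
  rewrite ?inb_cons_same, ?H3; try (rewrite inb_cons_diff by auto);
  try (rewrite (inb_cons_diff (v ++ [true])) by auto);
  try (rewrite (inb_cons_diff (v ++ [false])) by auto);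
  try rewrite H3; simpl; try ring.
  all: unfold sgl, zero3; repeat match goal with |- context [if inb ?x ?y then _ else _] => destruct (inb x y) end; simpl; try rewrite Mb_Nd2; ring.
Qed.

Definition Mrem (tr : list addr) : R :=
  sumR (map (fun e => eps e * (if inb e tr then 0 else 1)) (edges T)).

Lemma Mrem_down c tr : In c (edges T) -> ~ In c tr -> Mrem (c :: tr) = Mrem tr - eps c.
Proof. unfold Mrem. intros Hc Hn. pose proof (NoDup_edges T) as Hd. revert Hc Hd.
  generalize (edges T). induction l; intros Hc Hd. destruct Hc. inversion Hd; subst. simpl.
  destruct (addr_eq_dec a c) as [->|Hne].
  - rewrite inb_cons_same, (proj2 (inb_false _ _) Hn).
    rewrite (sumR_ext _ (fun e => eps e * (if inb e tr then 0 else 1))). ring.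
    intros x Hx. rewrite inb_cons_diff; auto. intros ->; auto.
  - destruct Hc as [->|Hc]; [congruence|]. rewrite inb_cons_diff by auto. rewrite IHl; auto. ring.
Qed.

Inductive Reach : addr -> list addr -> Prop :=
| R0 : Reach [] []
| RD v tr c : Reach v tr -> In c (children T v) -> ~ In c tr -> Reach c (c :: tr)
| RU v tr : Reach v tr -> v <> [] -> (forall c, In c (children T v) -> In c tr) ->
    Reach (removelast v) tr.

Lemma Inv v tr : Reach v tr ->
  (exists t, subtree_at T v = Some t) /\ (v <> [] -> In v tr) /\
  (forall x b, In (x ++ [b]) tr -> x <> [] -> In x tr) /\ Mrem tr = Mv v tr.
Proof. induction 1 as [|v tr c HR IH Hc Hn|v tr HR IH Hv Hall].
  - split; [exists T; apply sub_nil|]. split; [congruence|]. split; [simpl; tauto|].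
    unfold Mv; simpl. unfold locM. rewrite (loc_fresh [] T) by (try apply sub_nil; simpl; tauto).
    simpl. unfold Mrem, Mb. apply sumR_ext. intros x _. simpl. ring.
  - destruct IH as [[t Ht] [IH2 [IH3 IH4]]].
    destruct (children_spec _ _ _ Hc) as [t' [b [tc [Ht' [-> Htc]]]]].
    rewrite Ht in Ht'; inversion Ht'; subst t'.
    destruct (child_edge _ _ _ _ _ Ht Htc) as [Hce Hcs].
    split; [eauto|]. split; [simpl; auto|]. split.
    + intros x b' [E|E] Hx. apply app_inj_tail in E. destruct E as [-> _]. right; auto.
      right; eauto.
    + rewrite Mrem_down by auto. rewrite IH4, Mv_child, (Mv_eq v), (Mv_eq v).
      rewrite (proj2 (PU_indep v b tr 0 _ eq_refl)).
      rewrite (locM_down v t b tc tr) by auto.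
      assert (Hf : locM (v ++ [b]) ((v ++ [b] : addr) :: tr) = Mb tc (v ++ [b])).
      { unfold locM. rewrite (loc_fresh _ tc); auto. intros b' [E|E].
        apply (f_equal (@length bool)) in E; rewrite !length_app in E; simpl in E; lia.
        apply Hn; apply (IH3 _ _ E); intros E'; destruct v; discriminate. }
      rewrite Hf. ring.
  - destruct IH as [[t Ht] [IH2 [IH3 IH4]]].
    pose proof (app_removelast_last false Hv) as E.
    set (v' := removelast v) in *. set (b := last v false) in *. clearbody v' b. subst v.
    destruct (sub_prefix _ _ _ _ Ht) as [t' [Ht' _]].
    split; [eauto|]. split; [intros; apply (IH3 _ b); auto|]. split; auto.
    rewrite IH4, Mv_child. unfold locM. rewrite loc_done; auto. simpl; ring.
Qed.

Definition branch (F : history -> addr -> list addr -> R) (h : history) (v : addr)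
  (tr : list addr) (A : list addr) : R :=
  let h' := (v, A) :: h in
  match dfs_move T v tr A with
  | Wait => F h' v tr
  | Down c => F h' c (c :: tr)
  | Up => F h' (removelast v) tr
  | Choose c1 c2 => sigma h' * F h' c1 (c1 :: tr) + (1 - sigma h') * F h' c2 (c2 :: tr)
  end.
Definition step F h v tr : R :=
  sumR (map (fun A => act_weight p (edges T) A * branch F h v tr A) (subsets (edges T))).

Fixpoint expect (n : nat) (f : addr -> list addr -> R) (h : history) (v : addr) (tr : list addr) : R :=
  match n with
  | O => f v tr
  | S n' => step (fun h' v' tr' => expect n' f h' v' tr') h v tr
  end.

Lemma filter_nil_false {X} (P : X -> bool) l x : filter P l = [] -> In x l -> P x = false.
Proof. intros H Hx. destruct (P x) eqn:E; auto.
  assert (In x (filter P l)) by (apply filter_In; auto). rewrite H in H0; destruct H0. Qed.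

Lemma dm_down v tr A c : dfs_move T v tr A = Down c -> In c (children T v) /\ ~ In c tr.
Proof. unfold dfs_move. destruct (filter _ (children T v)) as [|a l] eqn:E.
  destruct v; [discriminate|]. destruct (inb _ A); discriminate.
  destruct (filter _ (a :: l)) as [|c1 [|c2 l2]] eqn:E2; try discriminate.
  intros H; inversion H; subst.
  assert (In c (a :: l)) by (eapply filter_In; rewrite E2; simpl; auto).
  rewrite <- E in H0. apply filter_In in H0. destruct H0. split; auto.
  apply inb_false. destruct (inb c tr); simpl in *; congruence. Qed.

Lemma dm_choose v tr A c1 c2 : dfs_move T v tr A = Choose c1 c2 ->
  (In c1 (children T v) /\ ~ In c1 tr) /\ (In c2 (children T v) /\ ~ In c2 tr).
Proof. unfold dfs_move. destruct (filter _ (children T v)) as [|a l] eqn:E.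
  destruct v; [discriminate|]. destruct (inb _ A); discriminate.
  destruct (filter _ (a :: l)) as [|d1 [|d2 l2]] eqn:E2; try discriminate.
  intros H; inversion H; subst.
  assert (In c1 (a :: l)) by (eapply filter_In; rewrite E2; simpl; auto).
  assert (In c2 (a :: l)) by (eapply filter_In; rewrite E2; simpl; auto).
  rewrite <- E in H0, H1. apply filter_In in H0, H1. destruct H0, H1.
  split; split; auto; apply inb_false; [destruct (inb c1 tr)|destruct (inb c2 tr)]; simpl in *; congruence. Qed.

Lemma dm_up v tr A : dfs_move T v tr A = Up ->
  v <> [] /\ forall c, In c (children T v) -> In c tr.
Proof. unfold dfs_move. destruct (filter _ (children T v)) as [|a l] eqn:E.
  - destruct v as [|b v]; [discriminate|]. intros _. split; [discriminate|].
    intros c Hc. pose proof (filter_nil_false _ _ _ E Hc). apply inb_true.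
    simpl in H. destruct (inb c tr); simpl in *; congruence.
  - destruct (filter _ (a :: l)) as [|d1 [|d2 l2]]; discriminate. Qed.

Lemma branch_ext_reach F1 F2 h v tr A : Reach v tr ->
  (forall h' v' tr', Reach v' tr' -> F1 h' v' tr' = F2 h' v' tr') ->
  branch F1 h v tr A = branch F2 h v tr A.
Proof. intros HR HF. unfold branch. destruct (dfs_move T v tr A) eqn:E.
  - apply HF; auto.
  - apply dm_down in E. apply HF. apply (RD v); [exact HR|tauto|tauto].
  - apply dm_up in E. apply HF. apply RU; tauto.
  - apply dm_choose in E. rewrite !HF; auto; (apply (RD v); [exact HR|tauto|tauto]). Qed.

Lemma branch_le_reach F1 F2 h v tr A : Reach v tr ->
  (forall h' v' tr', Reach v' tr' -> F1 h' v' tr' <= F2 h' v' tr') ->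
  branch F1 h v tr A <= branch F2 h v tr A.
Proof. intros HR HF. unfold branch. destruct (dfs_move T v tr A) eqn:E.
  - apply HF; auto.
  - apply dm_down in E. apply HF. apply (RD v); [exact HR|tauto|tauto].
  - apply dm_up in E. apply HF. apply RU; tauto.
  - apply dm_choose in E. pose proof (Hsig ((v, A) :: h)).
    assert (F1 ((v, A) :: h) a (a :: tr) <= F2 ((v, A) :: h) a (a :: tr)) by (apply HF; apply (RD v); [exact HR|tauto|tauto]).
    assert (F1 ((v, A) :: h) a0 (a0 :: tr) <= F2 ((v, A) :: h) a0 (a0 :: tr)) by (apply HF; apply (RD v); [exact HR|tauto|tauto]).
    nra. Qed.

Lemma step_ext_reach F1 F2 h v tr : Reach v tr ->
  (forall h' v' tr', Reach v' tr' -> F1 h' v' tr' = F2 h' v' tr') ->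
  step F1 h v tr = step F2 h v tr.
Proof. intros HR HF. unfold step. apply sumR_ext. intros A _. f_equal. apply branch_ext_reach; auto. Qed.

Lemma step_le_reach F1 F2 h v tr : Reach v tr ->
  (forall h' v' tr', Reach v' tr' -> F1 h' v' tr' <= F2 h' v' tr') ->
  step F1 h v tr <= step F2 h v tr.
Proof. intros HR HF. unfold step. apply sumR_le. intros A _. apply Rmult_le_compat_l.
  apply act_weight_nonneg; lra. apply branch_le_reach; auto. Qed.

Lemma step_ext F1 F2 h v tr : (forall h' v' tr', F1 h' v' tr' = F2 h' v' tr') ->
  step F1 h v tr = step F2 h v tr.
Proof. intros HF. unfold step, branch. apply sumR_ext. intros A _. f_equal.
  destruct (dfs_move T v tr A); rewrite ?HF; auto. Qed.

Lemma step_sum {X} (G : X -> history -> addr -> list addr -> R) (L : list X) h v tr :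
  step (fun h' v' tr' => sumR (map (fun x => G x h' v' tr') L)) h v tr =
  sumR (map (fun x => step (G x) h v tr) L).
Proof. unfold step. rewrite (sumR_ext _ (fun A => sumR (map (fun x =>
    act_weight p (edges T) A * branch (G x) h v tr A) L))).
  apply sumR_swap.
  intros A _. rewrite sumR_scal. f_equal. unfold branch.
  destruct (dfs_move T v tr A); auto.
  rewrite <- !sumR_scal, <- sumR_plus. auto. Qed.

Lemma step_scal c F h v tr : step (fun h' v' tr' => c * F h' v' tr') h v tr = c * step F h v tr.
Proof. unfold step. rewrite <- sumR_scal. apply sumR_ext. intros A _. unfold branch.
  destruct (dfs_move T v tr A); ring. Qed.

Definition Ie (e : addr) (v : addr) (tr : list addr) : R := if inb e tr then 0 else 1.

Lemma expect_zero e n h v tr : In e tr -> expect n (Ie e) h v tr = 0.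
Proof. revert h v tr; induction n; intros h v tr H; simpl.
  unfold Ie; rewrite (proj2 (inb_true _ _) H); auto.
  unfold step. rewrite <- (sumR_zero (subsets (edges T))). apply sumR_ext. intros A _.
  unfold branch. destruct (dfs_move T v tr A); rewrite ?IHn; simpl; auto; try ring. Qed.

Lemma notfound_expect e n h v tr : ~ In e tr ->
  notfound T p sigma e n h v tr = expect n (Ie e) h v tr.
Proof. revert h v tr; induction n; intros h v tr H; simpl.
  unfold Ie; rewrite (proj2 (inb_false _ _) H); auto.
  unfold step. apply sumR_ext. intros A _. f_equal. unfold branch. cbv zeta.
  destruct (dfs_move T v tr A).
  - apply IHn; auto.
  - destruct (addr_eq_dec a e) as [->|Hne]. rewrite expect_zero; simpl; auto.
    apply IHn. intros [E|E]; auto.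
  - apply IHn; auto.
  - destruct (addr_eq_dec a e) as [->|Hne]; destruct (addr_eq_dec a0 e) as [->|Hne'];
    repeat rewrite (expect_zero e n _ e (e :: tr)) by (simpl; auto);
    repeat rewrite IHn by (intros [E|E]; auto); auto.
Qed.

Lemma marg0' X : sumR (map (fun A => act_weight p (edges T) A * X) (subsets (edges T))) = X.
Proof. apply marg0, NoDup_edges. Qed.
Lemma marg1' c X Y : In c (edges T) ->
  sumR (map (fun A => act_weight p (edges T) A * (if inb c A then X else Y)) (subsets (edges T)))
  = p * X + (1 - p) * Y.
Proof. intros Hc. exact (marg1 p (edges T) c (fun b => if b then X else Y) (NoDup_edges T) Hc). Qed.
Lemma marg2' c1 c2 X11 X10 X01 X00 : In c1 (edges T) -> In c2 (edges T) -> c1 <> c2 ->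
  sumR (map (fun A => act_weight p (edges T) A *
     (if inb c1 A then (if inb c2 A then X11 else X10) else (if inb c2 A then X01 else X00)))
     (subsets (edges T)))
  = p * p * X11 + p * (1 - p) * X10 + (1 - p) * p * X01 + (1 - p) * (1 - p) * X00.
Proof. intros H1 H2 Hn.
  exact (marg2 p (edges T) c1 c2 (fun b1 b2 => if b1 then (if b2 then X11 else X10) else (if b2 then X01 else X00))
    (NoDup_edges T) H1 H2 Hn). Qed.

Definition untrav v tr := filter (fun c => negb (inb c tr)) (children T v).

Lemma dm_none v tr A : untrav v tr = [] -> v <> [] -> dfs_move T v tr A = if inb v A then Up else Wait.
Proof. unfold untrav, dfs_move. intros H Hv. rewrite H. destruct v; [congruence|reflexivity]. Qed.
Lemma dm_none0 tr A : untrav [] tr = [] -> dfs_move T [] tr A = Wait.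
Proof. unfold untrav, dfs_move. intros H. rewrite H. reflexivity. Qed.
Lemma dm_one v tr A c : untrav v tr = [c] -> dfs_move T v tr A = if inb c A then Down c else Wait.
Proof. unfold untrav, dfs_move. intros H. rewrite H. simpl. destruct (inb c A); reflexivity. Qed.
Lemma dm_two v tr A c0 c1 : untrav v tr = [c0; c1] -> dfs_move T v tr A =
  if inb c0 A then (if inb c1 A then Choose c0 c1 else Down c0) else (if inb c1 A then Down c1 else Wait).
Proof. unfold untrav, dfs_move. intros H. rewrite H. simpl.
  destruct (inb c0 A), (inb c1 A); reflexivity. Qed.

Lemma Psi_child' (c v : addr) b (tr : list addr) : c = v ++ [b] -> Psi c tr =
  locL c tr + Psi v tr + Mv v tr * (locD c tr + 1 / p).
Proof. intros ->. apply Psi_child. Qed.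
Lemma Mv_child' (c v : addr) b (tr : list addr) : c = v ++ [b] -> Mv c tr = locM c tr + Mv v tr.
Proof. intros ->. apply Mv_child. Qed.

Lemma bell_done v tr h : untrav v tr = [] -> loc v tr = zero3 -> Mrem tr = Mv v tr ->
  (v <> [] -> In v (edges T)) ->
  Psi v tr = Mrem tr + step (fun _ v' tr' => Psi v' tr') h v tr.
Proof. intros Hu Hl HM He. unfold step. destruct v as [|b0 v0] eqn:Ev.
  - rewrite (sumR_ext _ (fun A => act_weight p (edges T) A * Psi [] tr)).
    rewrite marg0'. rewrite HM. unfold Mv, Psi; simpl. unfold locM, locL; rewrite Hl; simpl; ring.
    intros A _. unfold branch. rewrite dm_none0; auto.
  - rewrite <- Ev in *. assert (Hv : v <> []) by (subst; discriminate).
    rewrite (sumR_ext _ (fun A => act_weight p (edges T) A *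
       (if inb v A then Psi (removelast v) tr else Psi v tr))).
    2:{ intros A _. unfold branch. rewrite dm_none; auto. destruct (inb v A); auto. }
    rewrite marg1' by auto.
    pose proof (app_removelast_last false Hv) as E.
    rewrite HM, (Psi_child' v _ _ tr E), (Mv_child' v _ _ tr E).
    unfold locL, locM, locD; rewrite Hl; simpl.
    pose proof (inv_p_pos p Hp). field. lra.
Qed.

Lemma bell_single (v : addr) (tr : list addr) h (c : addr) b tc : c = v ++ [b] -> untrav v tr = [c] ->
  loc v tr = sgl c tc -> loc v (c :: tr) = zero3 -> subtree_at T c = Some tc ->
  (forall b', ~ In (c ++ [b']) tr) -> In c (edges T) -> Mrem tr = Mv v tr ->
  Psi v tr = Mrem tr + step (fun _ v' tr' => Psi v' tr') h v tr.
Proof. intros Hc Hu Hl Hl' Hs Hf He HM. unfold step.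
  rewrite (sumR_ext _ (fun A => act_weight p (edges T) A *
       (if inb c A then Psi c (c :: tr) else Psi v tr))).
  2:{ intros A _. unfold branch. rewrite (dm_one _ _ _ c); auto. destruct (inb c A); auto. }
  rewrite marg1' by auto.
  assert (Hfr : loc c (c :: tr) = (U tc c, Mb tc c, tau p tc)).
  { apply loc_fresh; auto. intros b' [E|E]; [|eapply Hf; eauto].
    apply (f_equal (@length bool)) in E. rewrite length_app in E; simpl in E; lia. }
  assert (E1 : Psi c (c :: tr) = U tc c + PU (rev v) tr 0 + MU (rev v) tr * (tau p tc + 1 / p)).
  { rewrite (Psi_child' c v b _ Hc), Psi_eq, Mv_eq.
    rewrite (proj1 (PU_indep v b tr _ c Hc)), (proj2 (PU_indep v b tr 0 c Hc)).
    unfold locL, locM, locD. rewrite Hfr, Hl'. simpl. rewrite (PU_affine _ _ 0). ring. }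
  assert (E2 : Psi v tr = ((eps c + Mb tc c) / p + U tc c) + PU (rev v) tr 0 +
     MU (rev v) tr * (tau p tc + 2 / p)).
  { rewrite Psi_eq, PU_affine. unfold locL, locD. rewrite Hl. simpl. ring. }
  assert (E3 : Mrem tr = (eps c + Mb tc c) + MU (rev v) tr).
  { rewrite HM, Mv_eq. unfold locM. rewrite Hl. reflexivity. }
  rewrite E1, E2, E3. pose proof (inv_p_pos p Hp). field. lra.
Qed.

Lemma bell_double (v : addr) (tr : list addr) h l r :
  subtree_at T v = Some (Nd2 l r) -> ~ In (v ++ [false]) tr -> ~ In (v ++ [true]) tr ->
  (forall b b', ~ In ((v ++ [b]) ++ [b']) tr) -> Mrem tr = Mv v tr ->
  Psi v tr = Mrem tr + step (fun _ v' tr' => Psi v' tr') h v tr.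
Proof. intros H N0 N1 Nf HM.
  set (c0 := v ++ [false] : addr) in *. set (c1 := v ++ [true] : addr) in *.
  destruct (child_edge T v (Nd2 l r) false l H) as [He0 Hs0]. simpl; apply sub_nil.
  destruct (child_edge T v (Nd2 l r) true r H) as [He1 Hs1]. simpl; apply sub_nil.
  fold c0 in He0, Hs0. fold c1 in He1, Hs1.
  assert (Hneq : c0 <> c1) by apply app_snoc_neq.
  assert (Hu : untrav v tr = [c0; c1]).
  { unfold untrav, children. rewrite H. simpl. fold c0 c1.
    rewrite (proj2 (inb_false _ _) N0), (proj2 (inb_false _ _) N1). reflexivity. }
  assert (Hl : loc v tr = (U (Nd2 l r) v, Mb (Nd2 l r) v, tau p (Nd2 l r))).
  { apply loc_fresh; auto. intros [|]; auto. }
  assert (Hl0 : loc v (c0 :: tr) = sgl c1 r).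
  { unfold loc. rewrite H. fold c0 c1. rewrite inb_cons_same, inb_cons_diff by auto.
    rewrite (proj2 (inb_false _ _) N1). reflexivity. }
  assert (Hl1 : loc v (c1 :: tr) = sgl c0 l).
  { unfold loc. rewrite H. fold c0 c1. rewrite inb_cons_same, inb_cons_diff by auto.
    rewrite (proj2 (inb_false _ _) N0). reflexivity. }
  assert (Hf0 : loc c0 (c0 :: tr) = (U l c0, Mb l c0, tau p l)).
  { apply loc_fresh; auto. intros b' [E|E]; [|eapply Nf; eauto].
    apply (f_equal (@length bool)) in E. unfold c0 in E. rewrite !length_app in E; simpl in E; lia. }
  assert (Hf1 : loc c1 (c1 :: tr) = (U r c1, Mb r c1, tau p r)).
  { apply loc_fresh; auto. intros b' [E|E]; [|eapply Nf; eauto].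
    apply (f_equal (@length bool)) in E. unfold c1 in E. rewrite !length_app in E; simpl in E; lia. }
  set (P0 := PU (rev v) tr 0). set (MU0 := MU (rev v) tr).
  assert (E0 : Psi c0 (c0 :: tr) = U l c0 + ((eps c1 + Mb r c1) / p + U r c1) + P0
      + MU0 * (tau p r + 2 / p) + ((eps c1 + Mb r c1) + MU0) * (tau p l + 1 / p)).
  { rewrite (Psi_child' c0 v false _ eq_refl), Psi_eq, Mv_eq.
    rewrite (proj1 (PU_indep v false tr _ c0 eq_refl)), (proj2 (PU_indep v false tr 0 c0 eq_refl)).
    unfold locL, locM, locD. rewrite Hf0, Hl0. unfold sgl. simpl. rewrite (PU_affine _ _ (tau p r + 2 / p)).
    fold P0 MU0. ring. }
  assert (E1 : Psi c1 (c1 :: tr) = U r c1 + ((eps c0 + Mb l c0) / p + U l c0) + P0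
      + MU0 * (tau p l + 2 / p) + ((eps c0 + Mb l c0) + MU0) * (tau p r + 1 / p)).
  { rewrite (Psi_child' c1 v true _ eq_refl), Psi_eq, Mv_eq.
    rewrite (proj1 (PU_indep v true tr _ c1 eq_refl)), (proj2 (PU_indep v true tr 0 c1 eq_refl)).
    unfold locL, locM, locD. rewrite Hf1, Hl1. unfold sgl. simpl. rewrite (PU_affine _ _ (tau p l + 2 / p)).
    fold P0 MU0. ring. }
  pose proof (branching _ _ _ H) as Hb. fold c0 c1 in Hb.
  assert (E01 : Psi c1 (c1 :: tr) = Psi c0 (c0 :: tr)).
  { rewrite E0, E1. nra. }
  unfold step.
  rewrite (sumR_ext _ (fun A => act_weight p (edges T) A *
     (if inb c0 A then (if inb c1 A then Psi c0 (c0 :: tr) else Psi c0 (c0 :: tr))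
      else (if inb c1 A then Psi c1 (c1 :: tr) else Psi v tr)))).
  2:{ intros A _. unfold branch. rewrite (dm_two _ _ _ c0 c1) by auto.
      destruct (inb c0 A), (inb c1 A); auto. rewrite E01. ring. }
  rewrite marg2' by auto.
  assert (E2 : Psi v tr = U (Nd2 l r) v + P0 + MU0 * tau p (Nd2 l r)).
  { rewrite Psi_eq, PU_affine. unfold locL, locD. rewrite Hl. simpl. fold P0 MU0. ring. }
  assert (E3 : Mrem tr = Mb (Nd2 l r) v + MU0).
  { rewrite HM, Mv_eq. unfold locM. rewrite Hl. reflexivity. }
  rewrite E01, E2, E3, E0. cbn [U tau]. rewrite Mb_Nd2. fold c0 c1. unfold qinv.
  pose proof (inv_p_pos p Hp). pose proof (q_facts p Hp) as [Q1 [Q2 Q3]].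
  field. lra.
Qed.

Lemma Bellman v tr h : Reach v tr ->
  Psi v tr = Mrem tr + step (fun _ v' tr' => Psi v' tr') h v tr.
Proof. intros HR. destruct (Inv _ _ HR) as [[t Ht] [I2 [I3 I4]]].
  assert (He : v <> [] -> In v (edges T)) by (intros; eapply edge_of_sub; eauto).
  assert (Hnf : forall b, ~ In (v ++ [b]) tr -> forall b', ~ In ((v ++ [b]) ++ [b']) tr).
  { intros b Hb b' Hin. apply Hb. apply (I3 _ b' Hin). destruct v; discriminate. }
  pose proof (app_snoc_neq v) as Hneq.
  destruct t as [|u|l r].
  - apply bell_done; auto.
    unfold untrav, children. rewrite Ht. reflexivity.
    unfold loc. rewrite Ht. reflexivity.
  - destruct (child_edge T v (Nd1 u) false u Ht) as [He0 Hs0]. simpl; apply sub_nil.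
    destruct (inb (v ++ [false]) tr) eqn:E.
    + apply bell_done; auto.
      unfold untrav, children. rewrite Ht. simpl. rewrite E. reflexivity.
      unfold loc. rewrite Ht, E. reflexivity.
    + apply inb_false in E. apply (bell_single v tr h (v ++ [false]) false u); auto.
      unfold untrav, children. rewrite Ht. simpl. rewrite (proj2 (inb_false _ _) E). reflexivity.
      unfold loc. rewrite Ht, (proj2 (inb_false _ _) E). reflexivity.
      unfold loc. rewrite Ht, inb_cons_same. reflexivity.
  - destruct (child_edge T v (Nd2 l r) false l Ht) as [He0 Hs0]. simpl; apply sub_nil.
    destruct (child_edge T v (Nd2 l r) true r Ht) as [He1 Hs1]. simpl; apply sub_nil.
    destruct (inb (v ++ [false]) tr) eqn:E0; destruct (inb (v ++ [true]) tr) eqn:E1.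
    + apply bell_done; auto.
      unfold untrav, children. rewrite Ht. simpl. rewrite E0, E1. reflexivity.
      unfold loc. rewrite Ht, E0, E1. reflexivity.
    + apply (bell_single v tr h (v ++ [true]) true r); auto.
      unfold untrav, children. rewrite Ht. simpl. rewrite E0, E1. reflexivity.
      unfold loc. rewrite Ht, E0, E1. reflexivity.
      unfold loc. rewrite Ht, inb_cons_same, inb_cons_diff, E0 by auto. reflexivity.
      apply Hnf. apply inb_false; auto.
    + apply (bell_single v tr h (v ++ [false]) false l); auto.
      unfold untrav, children. rewrite Ht. simpl. rewrite E0, E1. reflexivity.
      unfold loc. rewrite Ht, E0, E1. reflexivity.
      unfold loc. rewrite Ht, inb_cons_same, inb_cons_diff, E1 by auto. reflexivity.
      apply Hnf. apply inb_false; auto.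
    + apply inb_false in E0. apply inb_false in E1.
      apply (bell_double v tr h l r); auto.
      intros [|] b'; apply Hnf; auto.
Qed.

Lemma step_plus F1 F2 h v tr :
  step (fun h' v' tr' => F1 h' v' tr' + F2 h' v' tr') h v tr = step F1 h v tr + step F2 h v tr.
Proof. unfold step. rewrite <- sumR_plus. apply sumR_ext. intros A _. unfold branch.
  destruct (dfs_move T v tr A); ring. Qed.

Lemma step_zero h v tr : step (fun _ _ _ => 0) h v tr = 0.
Proof. unfold step. transitivity (sumR (map (fun _ : list addr => 0) (subsets (edges T)))).
  apply sumR_ext. intros A _. unfold branch. destruct (dfs_move T v tr A); ring.
  apply sumR_zero. Qed.

Lemma tele n : forall v tr h, Reach v tr ->
  Psi v tr = sumR (map (fun k => expect k (fun _ tr' => Mrem tr') h v tr) (seq 0 n))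
             + expect n (fun v' tr' => Psi v' tr') h v tr.
Proof. induction n; intros v tr h HR. simpl; ring.
  cbn [seq map sumR]. rewrite <- seq_shift, map_map. cbn [expect].
  rewrite <- (step_sum (fun k h' v' tr' => expect k (fun _ tr'0 => Mrem tr'0) h' v' tr')).
  rewrite Rplus_assoc, <- step_plus.
  rewrite (Bellman v tr h HR) at 1. f_equal.
  apply step_ext_reach; [auto|]. intros h' v' tr' HR'. apply IHn; auto. Qed.

Lemma expect_le n f1 f2 : (forall v tr, Reach v tr -> f1 v tr <= f2 v tr) ->
  forall h v tr, Reach v tr -> expect n f1 h v tr <= expect n f2 h v tr.
Proof. intros Hf; induction n; intros h v tr HR; simpl; auto.
  apply step_le_reach; auto. Qed.

Lemma expect_zero0 n h v tr : expect n (fun _ _ => 0) h v tr = 0.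
Proof. revert h v tr; induction n; intros; simpl; auto.
  rewrite (step_ext _ (fun _ _ _ => 0)); auto. apply step_zero. Qed.

Lemma expect_scal n c f h v tr : expect n (fun v' tr' => c * f v' tr') h v tr = c * expect n f h v tr.
Proof. revert h v tr; induction n; intros; simpl; auto.
  rewrite (step_ext _ (fun h' v' tr' => c * expect n f h' v' tr')); auto. apply step_scal. Qed.

Lemma expect_lin_sum n (L : list addr) (g : addr -> addr -> list addr -> R) h v tr :
  expect n (fun v' tr' => sumR (map (fun e => eps e * g e v' tr') L)) h v tr =
  sumR (map (fun e => eps e * expect n (g e) h v tr) L).
Proof. revert h v tr; induction n; intros; simpl; auto.
  rewrite (step_ext _ (fun h' v' tr' => sumR (map (fun e => eps e * expect n (g e) h' v' tr') L))).
  2:{ intros; apply IHn. }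
  rewrite step_sum. apply sumR_ext. intros e _.
  apply (step_scal (eps e) (fun h' v' tr' => expect n (g e) h' v' tr')). Qed.

Definition C1 := 1 / p + tau p T / 2.
Definition Bd := tau p T + 1 / p.

Lemma loc_bounds u tr : 0 <= locM u tr /\ 0 <= locL u tr <= C1 * locM u tr /\
  0 <= locD u tr <= tau p T.
Proof. pose proof (inv_p_pos p Hp) as Hpi. pose proof (tau_nonneg p Hp T) as HT.
  pose proof (q_facts p Hp) as [Q1 [Q2 Q3]].
  assert (Hsgl : forall t c b, subtree_at T u = Some t -> subtree_at t [b] = Some c ->
    tau p c + 2 / p <= tau p t ->
    let x := sgl (u ++ [b]) c in 0 <= snd (fst x) /\ 0 <= fst (fst x) <= C1 * snd (fst x) /\
      0 <= snd x <= tau p T).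
  { intros t c b H1 H2 H3. destruct (child_edge _ _ _ _ _ H1 H2) as [He Hs].
    pose proof (eps_nonneg _ He). pose proof (Mb_nonneg _ _ Hs).
    pose proof (Lambda_bounds p Hp c) as [L1 L2]. pose proof (tau_sub p Hp _ _ _ Hs).
    pose proof (tau_nonneg p Hp c). pose proof (tau_sub p Hp _ _ _ H1).
    unfold sgl; simpl. rewrite (UL _ _ Hs). unfold C1.
    assert (Mb c (u ++ [b]) * (tau p c / 2 + Lambda p c) <= Mb c (u ++ [b]) * (tau p T / 2)) by nra.
    assert (0 <= Mb c (u ++ [b]) * (tau p c / 2 + Lambda p c)) by nra.
    unfold Rdiv in *. split; [lra|]. split; [split; nra|lra]. }
  unfold locM, locL, locD, loc. destruct (subtree_at T u) as [[|t|l r]|] eqn:E;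
  try (unfold zero3, C1; simpl; unfold Rdiv in *; lra).
  - destruct (inb _ tr); [unfold zero3, C1; simpl; unfold Rdiv in *; lra|].
    apply (Hsgl (Nd1 t) t false); auto. simpl; apply sub_nil. cbn [tau]; lra.
  - assert (Hl : tau p l + 2 / p <= tau p (Nd2 l r)) by (cbn [tau]; pose proof (tau_nonneg p Hp r);
      unfold Rdiv in *; lra).
    assert (Hr : tau p r + 2 / p <= tau p (Nd2 l r)) by (cbn [tau]; pose proof (tau_nonneg p Hp l);
      unfold Rdiv in *; lra).
    destruct (inb (u ++ [false]) tr); destruct (inb (u ++ [true]) tr);
    try (unfold zero3, C1; simpl; unfold Rdiv in *; lra).
    + apply (Hsgl (Nd2 l r) r true); auto. simpl; apply sub_nil.
    + apply (Hsgl (Nd2 l r) l false); auto. simpl; apply sub_nil.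
    + cbn [fst snd]. pose proof (UL _ _ E) as HU. pose proof (Mb_nonneg _ _ E).
      pose proof (Lambda_bounds p Hp (Nd2 l r)) as [L1 L2]. pose proof (tau_sub p Hp _ _ _ E).
      rewrite HU. unfold C1.
      assert (Mb (Nd2 l r) u * (tau p (Nd2 l r) / 2 + Lambda p (Nd2 l r)) <= Mb (Nd2 l r) u * (tau p T / 2)) by nra.
      assert (0 <= Mb (Nd2 l r) u * (tau p (Nd2 l r) / 2 + Lambda p (Nd2 l r))) by nra.
      pose proof (tau_nonneg p Hp (Nd2 l r)).
      unfold Rdiv in *. split; [lra|]. split; [split; nra|lra].
Qed.

Lemma Phi_bounds r tr : 0 <= Mup r tr /\ 0 <= Phi r tr /\
  Phi r tr <= (C1 + INR (length r) * Bd) * Mup r tr.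
Proof. pose proof (inv_p_pos p Hp) as Hpi. pose proof (tau_nonneg p Hp T) as HT.
  assert (0 <= C1) by (unfold C1, Rdiv in *; lra). assert (0 <= Bd) by (unfold Bd; lra).
  induction r as [|b r IH]; cbn [Mup Phi length].
  - destruct (loc_bounds [] tr) as [A1 [A2 A3]]. simpl. split; [lra|]. split; lra.
  - destruct (loc_bounds (rev (b :: r)) tr) as [A1 [A2 A3]]. destruct IH as [I1 [I2 I3]].
    rewrite S_INR. pose proof (pos_INR (length r)).
    assert (Mup r tr * (locD (rev (b :: r)) tr + 1 / p) <= Mup r tr * Bd) by (unfold Bd; nra).
    assert (0 <= Mup r tr * (locD (rev (b :: r)) tr + 1 / p)) by nra.
    assert (0 <= (INR (length r) + 1) * Bd * locM (rev (b :: r)) tr) by (apply Rmult_le_pos; [apply Rmult_le_pos|]; lra).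
    split; [lra|]. split; [lra|]. nra.
Qed.

Definition Kc := C1 + INR (hgt T) * Bd.

Lemma Psi_bounds v tr : Reach v tr -> 0 <= Psi v tr <= Kc * Mrem tr.
Proof. intros HR. destruct (Inv _ _ HR) as [[t Ht] [_ [_ HM]]].
  rewrite HM. unfold Psi, Mv. destruct (Phi_bounds (rev v) tr) as [A1 [A2 A3]].
  split; auto. pose proof (length_sub _ _ _ Ht) as Hl. rewrite <- length_rev in Hl.
  apply le_INR in Hl. assert (0 <= Bd) by (unfold Bd; pose proof (inv_p_pos p Hp);
    pose proof (tau_nonneg p Hp T); lra).
  unfold Kc. assert (0 <= (INR (hgt T) - INR (length (rev v))) * Bd * Mup (rev v) tr) by (apply Rmult_le_pos; [apply Rmult_le_pos|]; lra). nra. Qed.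

Lemma sum_f_seq (G : nat -> R) n : sum_f_R0 G n = sumR (map G (seq 0 (S n))).
Proof. induction n. simpl; ring. rewrite seq_S, map_app, sumR_app. simpl. rewrite IHn. simpl. ring. Qed.

Lemma main_sec : infinite_sum (fun n => payoff_tail T p sigma eps n) (tau p T / 2 + Lambda p T).
Proof.
  set (G := fun n => payoff_tail T p sigma eps n).
  assert (HG : forall k, G k = expect k (fun _ tr => Mrem tr) [] [] []).
  { intros k. unfold G, payoff_tail.
    rewrite (sumR_ext _ (fun e => eps e * expect k (Ie e) [] [] [])).
    rewrite <- (expect_lin_sum k (edges T) Ie). reflexivity.
    intros e _. rewrite notfound_expect; auto. }
  assert (HP0 : Psi [] [] = tau p T / 2 + Lambda p T).
  { unfold Psi; simpl. unfold locL. rewrite (loc_fresh [] T) by (try apply sub_nil; simpl; tauto).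
    simpl. rewrite (UL _ _ (sub_nil T)). destruct Hdens as [_ [H2 _]].
    unfold Mb. simpl. rewrite (sumR_ext _ eps) by auto. rewrite H2. ring. }
  set (Psi0 := tau p T / 2 + Lambda p T) in *.
  set (E := fun n => expect n (fun v' tr' => Psi v' tr') [] [] []).
  assert (HE : forall n, 0 <= E n <= Kc * G n).
  { intros n. unfold E. split.
    rewrite <- (expect_zero0 n [] [] []). apply expect_le; [|constructor].
    intros; apply Psi_bounds; auto.
    rewrite HG, <- expect_scal. apply expect_le; [|constructor].
    intros; apply Psi_bounds; auto. }
  assert (HGn : forall k, 0 <= G k).
  { intros k. rewrite HG. rewrite <- (expect_zero0 k [] [] []). apply expect_le; [|constructor].
    intros v tr HR. destruct (Psi_bounds v tr HR). destruct (Inv _ _ HR) as [_ [_ [_ HM]]].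
    rewrite HM. unfold Mv. apply Phi_bounds. }
  assert (HT : forall n, sum_f_R0 G n = Psi0 - E (S n)).
  { intros n. rewrite sum_f_seq, <- HP0. pose proof (tele (S n) [] [] [] R0) as Ht.
    rewrite (sumR_ext _ (fun k => expect k (fun _ tr' => Mrem tr') [] [] [])) by (intros; apply HG).
    unfold E. lra. }
  assert (Hg : Un_growing (sum_f_R0 G)).
  { intros n. simpl. pose proof (HGn (S n)). lra. }
  assert (Hub : has_ub (sum_f_R0 G)).
  { exists Psi0. intros x [n ->]. rewrite HT. pose proof (HE (S n)). lra. }
  destruct (growing_cv _ Hg Hub) as [l Hl].
  assert (HK : 0 <= Kc).
  { unfold Kc, C1, Bd. pose proof (inv_p_pos p Hp). pose proof (tau_nonneg p Hp T).
    pose proof (pos_INR (hgt T)). assert (0 <= INR (hgt T) * (tau p T + 1 / p)) by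
    (apply Rmult_le_pos; lra). unfold Rdiv in *; lra. }
  intros ep Hep.
  set (ep' := ep / (2 * (Kc + 1))).
  assert (Hep' : 0 < ep') by (unfold ep'; apply Rdiv_lt_0_compat; lra).
  assert (Hep2 : 2 * (Kc + 1) * ep' = ep) by (unfold ep'; field; lra).
  destruct (Hl ep' Hep') as [N HN]. exists N. intros n Hn.
  pose proof (HN n Hn) as H1. pose proof (HN (S n) ltac:(lia)) as H2.
  unfold Rdist in *. apply Rabs_def2 in H1. apply Rabs_def2 in H2.
  rewrite HT. replace (Psi0 - E (S n) - Psi0) with (- E (S n)) by ring.
  rewrite Rabs_Ropp. pose proof (HE (S n)) as [E1 E2]. rewrite Rabs_right by lra.
  assert (G (S n) = sum_f_R0 G (S n) - sum_f_R0 G n) by (simpl; ring).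
  assert (G (S n) < 2 * ep') by lra.
  assert (Kc * G (S n) <= Kc * (2 * ep')) by (apply Rmult_le_compat_l; lra).
  nra.
Qed.
End Main.

Theorem mainTheorem9 (T : btree) (p : R) (sigma : history -> R)
  (eps : addr -> R) :
  0 < p <= 1 ->
  (forall h, 0 <= sigma h <= 1) ->
  equal_branching_density T p eps ->
  infinite_sum (fun n => payoff_tail T p sigma eps n)
    (tau p T / 2 + Lambda p T).
Proof. intros Hp Hs Hd. exact (main_sec T p sigma eps Hp Hs Hd). Qed.
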